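(* Let $n\ge1$ and let $P=(Q,\{a,\varepsilon\},\Sigma,R,\{q_f\},q_{in},a_{in})$ be an order-$n$ HOPDA such that every rule of $R$ whose operation is $\mathrm{push}_n$ or $\mathrm{pop}_n$ has output $\varepsilon$, and whose language is $L(P)=\{$words of runs from $(q_{in},[\cdots[a_{in}]_1\cdots]_n)$ to $(q_f,[\,]_n)\}$, where $[\,]_n$ is the empty order-$n$ stack. Let $\widehat{P}$ be the order-$(n-1)$ HOPDA with tests defined below. Then $\mathrm{Unb}_a(L(P))$ holds if and only if $\mathrm{Unb}_a(L(\widehat{P}))$ holds. Definition of $\widehat{P}$: for $q,q'\in Q$ let $C_{q,q'}$ be the set of order-$(n-1)$ stacks $w$ such that $P$ has a run from $(q,[w]_n)$ to $(q',[\,]_n)$, and $C^a_{q,q'}\subseteq C_{q,q'}$ the set of those $w$ for which such a run exists that outputs at least one $a$; let $\mathrm{True}$ be the set of all order-$(n-1)$ stacks. The control states of $\widehat{P}$ are the pairs $(p_1,p_2)\in Q\times Q$ plus a fresh state $f$; the initial state is $(q_{in},q_f)$, the initial stack is $[\cdots[a_{in}]_1\cdots]_{n-1}$ (just $a_{in}$ if $n=1$), the final states are $\{f\}$, and the rules (written source, top symbol, test, output, operation, target) are: (i) for each $(p_1,b,\gamma,op,p_1')\in R$ with $op\notin\{\mathrm{push}_n,\mathrm{pop}_n\}$ and each $p_2\in Q$: $((p_1,p_2),b,\mathrm{True},\gamma,op,(p_1',p_2))$; (ii) for each $(p_1,b,\varepsilon,\mathrm{pop}_n,p_2)\in R$: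 $((p_1,p_2),b,\mathrm{True},\varepsilon,\mathrm{rew}_b,f)$; (iii) for each $(p_1,b,\varepsilon,\mathrm{push}_n,p_1')\in R$ and all $p,p_2\in Q$: $((p_1,p_2),b,C_{p,p_2},\varepsilon,\mathrm{rew}_b,(p_1',p))$ and $((p_1,p_2),b,C^a_{p,p_2},a,\mathrm{rew}_b,(p_1',p))$; (iv) for each $(p_1,b,\varepsilon,\mathrm{push}_n,p_1')\in R$ and all $p,p_2\in Q$: $((p_1,p_2),b,C_{p_1',p},\varepsilon,\mathrm{rew}_b,(p,p_2))$ and $((p_1,p_2),b,C^a_{p_1',p},a,\mathrm{rew}_b,(p,p_2))$.
   Context: Order-$0$ stacks are elements of a finite alphabet $\Sigma$; an order-$(k+1)$ stack is a finite (possibly empty) sequence $[w_1\dots w_\ell]_{k+1}$ of order-$k$ stacks, $w_1$ topmost. For an order-$n$ stack: $\mathrm{top}_1$ is the topmost symbol; $\mathrm{rew}_b$ replaces the topmost symbol by $b$; $\mathrm{push}_k$ ($1\le k\le n$) replaces the topmost order-$k$ stack $[w_1w_2\dots w_\ell]_k$ by $[w_1w_1w_2\dots w_\ell]_k$; $\mathrm{pop}_k$ replaces it by $[w_2\dots w_\ell]_k$. $\mathrm{Ops}_n$ is the set of these operations for $1\le k\le n$ (only $\mathrm{rew}_b$ when $n=0$). An order-$n$ HOPDA $(Q,\Gamma,\Sigma,R,F,q_{in},a_{in})$ has rules $R\subseteq Q\times\Sigma\times\Gamma\times\mathrm{Ops}_n\times Q$, where $\Gamma$ contains $\varepsilon$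 denoting the empty word; $(q,w)\xrightarrow{\gamma}(q',op(w))$ when $(q,b,\gamma,op,q')\in R$ and $\mathrm{top}_1(w)=b$; a run's word is the concatenation of its outputs. An order-$n$ HOPDA with tests has rules $(q,b,T,\gamma,op,q')$ where $T$ is a set of order-$n$ stacks, and the transition $(q,w)\xrightarrow{\gamma}(q',op(w))$ additionally requires $w\in T$. Unless stated otherwise, $L(\cdot)$ is the set of words of runs from $(q_{in},[\cdots[a_{in}]_1\cdots]_n)$ to a configuration with control state in $F$. $\mathrm{Unb}_a(L)$ holds iff for every $N$ some $w\in L$ contains at least $N$ occurrences of $a$. *)

(* Defs.v *)
From mathcomp Require Import all_boot.
Set Implicit Arguments. Unset Strict Implicit. Unset Printing Implicit Defensive.

(* Order-0 stacks are symbols of S (= Sigma); an order-(k+1) stack is a finite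
   sequence of order-k stacks, head = topmost. *)
Fixpoint stack (S : Type) (n : nat) : Type :=
  match n with 0 => S | m.+1 => seq (stack S m) end.

Fixpoint init_stack (S : Type) (n : nat) (a : S) : stack S n :=
  match n return stack S n with 0 => a | m.+1 => [:: init_stack m a] end.

Inductive op (S : Type) := Rew of S | Push of nat | Pop of nat.
Arguments Rew {S}. Arguments Push {S}. Arguments Pop {S}.

Definition in_ops (S : Type) (n : nat) (o : op S) : bool :=
  match o with Rew _ => true | Push k | Pop k => (0 < k) && (k <= n) end.

Fixpoint top1 (S : Type) (n : nat) : stack S n -> option S :=
  match n return stack S n -> option S with
  | 0 => fun s => Some s
  | m.+1 => fun s => match s with [::] => None | w :: _ => top1 w end
  end.

Fixpoint apply_op (S : Type) (o : op S) (n : nat) : stack S n -> option (stack S n) :=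
  match n return stack S n -> option (stack S n) with
  | 0 => fun s => match o with Rew b => Some b | _ => None end
  | m.+1 => fun s =>
      match s with
      | [::] => None
      | w :: s' =>
          match o with
          | Push k => if k == m.+1 then Some (w :: w :: s')
                      else omap (fun w' => w' :: s') (apply_op o w)
          | Pop k => if k == m.+1 then Some s'
                     else omap (fun w' => w' :: s') (apply_op o w)
          | Rew _ => omap (fun w' => w' :: s') (apply_op o w)
          end
      end
  end.

(* output of a transition: None = epsilon *)
Definition out (G : Type) (g : option G) : seq G :=
  if g is Some x then [:: x] else [::].

Inductive run (C G : Type) (step : C -> option G -> C -> Prop) : C -> seq G -> C -> Prop :=
| run_refl c : run step c [::] c
| run_step c g c1 u c2 : step c g c1 -> run step c1 u c2 -> run step c (out g ++ u) c2.

Definition hstep (Q S G : Type) (n : nat) (R : Q -> S -> option G -> op S -> Q -> Prop)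
    (c : Q * stack S n) (g : option G) (c' : Q * stack S n) : Prop :=
  exists b o, R c.1 b g o c'.1 /\ top1 c.2 = Some b /\ apply_op o c.2 = Some c'.2.

Definition tstep (Q S G : Type) (n : nat)
    (Rt : Q -> S -> (stack S n -> Prop) -> option G -> op S -> Q -> Prop)
    (c : Q * stack S n) (g : option G) (c' : Q * stack S n) : Prop :=
  exists b T o, Rt c.1 b T g o c'.1 /\ top1 c.2 = Some b /\ T c.2 /\
                apply_op o c.2 = Some c'.2.

Definition Unb (G : eqType) (a : G) (L : seq G -> Prop) : Prop :=
  forall N, exists w, L w /\ N <= count_mem a w.

Definition LP (Q S : Type) (G : Type) (m : nat) (R : Q -> S -> option G -> op S -> Q -> Prop)
    (qin qf : Q) (ain : S) (w : seq G) : Prop :=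
  run (hstep (n := m.+1) R) (qin, init_stack m.+1 ain) w (qf, ([::] : stack S m.+1)).

Definition Cset (Q S : Type) (G : Type) (m : nat) (R : Q -> S -> option G -> op S -> Q -> Prop)
    (q q' : Q) (w : stack S m) : Prop :=
  exists u, run (hstep (n := m.+1) R) (q, ([:: w] : stack S m.+1)) u (q', ([::] : stack S m.+1)).

Definition Caset (Q S : Type) (G : eqType) (a : G) (m : nat)
    (R : Q -> S -> option G -> op S -> Q -> Prop) (q q' : Q) (w : stack S m) : Prop :=
  exists u, run (hstep (n := m.+1) R) (q, ([:: w] : stack S m.+1)) u (q', ([::] : stack S m.+1))
            /\ a \in u.

Inductive hat_state (Q : Type) := HPair of Q & Q | HFin.
Arguments HFin {Q}.

Section Hat.
Variables (Q S : Type) (G : eqType) (a : G) (m : nat)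
          (R : Q -> S -> option G -> op S -> Q -> Prop).

Inductive hat_rule : hat_state Q -> S -> (stack S m -> Prop) -> option G -> op S ->
                     hat_state Q -> Prop :=
| hat_i p1 b g o p1' p2 : R p1 b g o p1' -> o <> Push m.+1 -> o <> Pop m.+1 ->
    hat_rule (HPair p1 p2) b (fun _ => True) g o (HPair p1' p2)
| hat_ii p1 b p2 : R p1 b None (Pop m.+1) p2 ->
    hat_rule (HPair p1 p2) b (fun _ => True) None (Rew b) HFin
| hat_iii_eps p1 b p1' p p2 : R p1 b None (Push m.+1) p1' ->
    hat_rule (HPair p1 p2) b (Cset R p p2) None (Rew b) (HPair p1' p)
| hat_iii_a p1 b p1' p p2 : R p1 b None (Push m.+1) p1' ->
    hat_rule (HPair p1 p2) b (Caset a R p p2) (Some a) (Rew b) (HPair p1' p)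
| hat_iv_eps p1 b p1' p p2 : R p1 b None (Push m.+1) p1' ->
    hat_rule (HPair p1 p2) b (Cset R p1' p) None (Rew b) (HPair p p2)
| hat_iv_a p1 b p1' p p2 : R p1 b None (Push m.+1) p1' ->
    hat_rule (HPair p1 p2) b (Caset a R p1' p) (Some a) (Rew b) (HPair p p2).

Definition LPhat (qin qf : Q) (ain : S) (w : seq G) : Prop :=
  exists s : stack S m, run (tstep hat_rule) (HPair qin qf, init_stack m ain) w (HFin, s).
End Hat.

(* Main.v *)
Require Import Defs.
From mathcomp Require Import all_boot zify.
Set Implicit Arguments. Unset Strict Implicit. Unset Printing Implicit Defensive.

Section Pf.
Variables (Q S : finType) (G : eqType) (a : G) (m : nat)
  (R : Q -> S -> option G -> op S -> Q -> Prop).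

Definition stepP := @hstep Q S G m.+1 R.
Definition stepH := @tstep (hat_state Q) S G m (@hat_rule Q S G a m R).

Inductive runk : nat -> Q * stack S m.+1 -> seq G -> Q * stack S m.+1 -> Prop :=
| rk_refl c : runk 0 c [::] c
| rk_step k c g c1 u c2 : stepP c g c1 -> runk k c1 u c2 -> runk k.+1 c (out g ++ u) c2.

Lemma run_runk c u c' : run stepP c u c' -> exists k, runk k c u c'.
Proof.
elim=> [c0|c0 g c1 u0 c2 H _ [k Hk]]; first by exists 0; constructor.
by exists k.+1; econstructor; eauto.
Qed.

Lemma runk_run k c u c' : runk k c u c' -> run stepP c u c'.
Proof. by elim=> [c0|k0 c0 g c1 u0 c2 H _ IH]; [constructor|econstructor; eauto]. Qed.

Lemma run_cat {C : Type} (st : C -> option G -> C -> Prop) c u c1 v c2 :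
  run st c u c1 -> run st c1 v c2 -> run st c (u ++ v) c2.
Proof.
elim=> [//|c0 g c3 u0 c4 H _ IH] H2.
rewrite -catA; econstructor; eauto.
Qed.

Lemma apply_app o (x : stack S m) (s rest : seq (stack S m)) :
  @apply_op S o m.+1 ((x :: s) ++ rest) =
  omap (fun t : seq (stack S m) => t ++ rest) (@apply_op S o m.+1 (x :: s)).
Proof.
case: o => [b|k|k] /=.
- by case: (apply_op _ x).
- by case: eqP => // _; case: (apply_op _ x).
- by case: eqP => // _; case: (apply_op _ x).
Qed.

Lemma apply_lvl o (x : stack S m) (s : seq (stack S m)) :
  o <> Push m.+1 -> o <> Pop m.+1 ->
  @apply_op S o m.+1 (x :: s) = omap (fun w' => w' :: s) (apply_op o x).
Proof.
case: o => [b|k|k] //= H1 H2; case: eqP => // E; [by case: H1; rewrite E|by case: H2; rewrite E].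
Qed.

Lemma apply_rew n (w : stack S n) b : top1 w = Some b -> apply_op (Rew b) w = Some w.
Proof.
elim: n w => [w /= [->]//|n IH [|x s] //= /IH ->] //.
Qed.

Lemma lift rest c u c' : run stepP c u c' ->
  run stepP (c.1, (c.2 : seq (stack S m)) ++ rest) u (c'.1, (c'.2 : seq (stack S m)) ++ rest).
Proof.
elim=> [[q s]|[q s] g [q1 s1] u0 c2 [b [o [HR [Ht Ha]]]] _ IH]; first by constructor.
simpl in HR. move: s Ht Ha => [|x s] Ht Ha; first by [].
econstructor; last exact: IH.
exists b, o; split; first exact HR. split; first exact Ht.
change (apply_op o ((x::s) ++ rest : stack S m.+1) = Some (s1 ++ rest : stack S m.+1)).
by rewrite apply_app Ha.
Qed.

Lemma runk_nil k q u c : runk k (q, [::]) u c -> u = [::] /\ c = (q, [::]).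
Proof.
move=> H; inversion H; subst => //.
by case: H0 => [b [o [_ [/= Ht _]]]].
Qed.

Lemma split k : forall q (s rest : seq (stack S m)) u q' (t : seq (stack S m)),
  runk k (q, s ++ rest) u (q', t) -> size t <= size rest ->
  exists p u1 u2 k1 k2, [/\ u = u1 ++ u2, k1 + k2 = k,
     runk k1 (q, s) u1 (p, [::]) & runk k2 (p, rest) u2 (q', t)].
Proof.
elim: k => [|k IH] q s rest u q' t H Hs.
- inversion H; subst.
  case: s H Hs => [|x s] H Hs.
  + by exists q', [::], [::], 0, 0; split=> //; constructor.
  + by move: Hs; rewrite size_cat /=; lia.
- case: s H => [|x s] H.
  + by exists q, [::], u, 0, k.+1; split=> //; constructor.
  inversion H; subst.
  destruct c1 as [q1 s1'].
  move: H1 => [b [o [HR [Ht Ha]]]]. simpl in HR.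
  change (apply_op o ((x::s) ++ rest : stack S m.+1) = Some s1') in Ha.
  rewrite apply_app in Ha.
  case E: (apply_op o (x :: s : stack S m.+1)) Ha => [s1|] //= [Ha].
  subst s1'.
  have [p [u1 [u2 [k1 [k2 [-> Hk Hr1 Hr2]]]]]] := IH _ _ _ _ _ _ H2 Hs.
  exists p, (out g ++ u1), u2, k1.+1, k2; split.
  + by rewrite catA.
  + by rewrite addSn Hk.
  + apply: (rk_step (c1:=(q1,s1))) Hr1; exists b, o; split; [exact HR|split; [exact Ht|exact E]].
  + exact Hr2.
Qed.

Lemma hat_nil s u c' : run stepH (HFin, s) u c' -> u = [::].
Proof.
move=> H; inversion H; subst => //.
case: H0 => [b [T [o [HR _]]]]. inversion HR.
Qed.

Lemma hat_to_P c u c' : run stepH c u c' -> c'.1 = HFin ->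
  forall p1 p2, c.1 = HPair p1 p2 ->
  exists v, run stepP (p1, [:: c.2]) v (p2, [::]) /\ count_mem a u <= count_mem a v.
Proof.
elim=> [c0 E p1 p2 E'|[h w] g [h1 w1] u0 c2 [b [T [o [HR [Ht [HT Ha]]]]]] Hrun IH Ef p1 p2 /= Eh];
  first by rewrite E in E'.
simpl in *. subst h.
inversion HR; subst.
-
  have [v [Hv Hc]] := IH Ef _ _ erefl.
  exists (out g ++ v); split; last by rewrite !count_cat leq_add2l.
  apply: (run_step (c1:=(p1',[:: w1]))) Hv.
  exists b, o; split=> //; split=> //.
  by rewrite apply_lvl // Ha.
-
  rewrite (hat_nil Hrun).
  exists [::]; split=> //.
  apply: (run_step (g:=None) (c1:=(p2,[::])) (u:=[::])); last by constructor.
  by exists b, (Pop m.+1); split=> //; split=> //=; rewrite eqxx.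
-
  rewrite (apply_rew Ht) in Ha; case: Ha => Ha; subst w1.
  have [v [Hv Hc]] := IH Ef _ _ erefl.
  case: HT => u2 Hu2.
  exists (out None ++ (v ++ u2)); split; last by rewrite /= count_cat (leq_trans Hc) ?leq_addr.
  apply: (run_step (c1:=(p1',[:: w; w]))).
    by exists b, (Push m.+1); split=> //; split=> //=; rewrite eqxx.
  apply: run_cat Hu2.
  exact: (lift [:: w] Hv).
-
  rewrite (apply_rew Ht) in Ha; case: Ha => Ha; subst w1.
  have [v [Hv Hc]] := IH Ef _ _ erefl.
  case: HT => u2 [Hu2 Hin].
  exists (out None ++ (v ++ u2)); split; last first.
    rewrite /= count_cat eqxx add1n.
    have : 0 < count_mem a u2 by rewrite -has_count has_pred1.
    move: Hc; clear; lia.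
  apply: (run_step (c1:=(p1',[:: w; w]))).
    by exists b, (Push m.+1); split=> //; split=> //=; rewrite eqxx.
  apply: run_cat Hu2.
  exact: (lift [:: w] Hv).
-
  rewrite (apply_rew Ht) in Ha; case: Ha => Ha; subst w1.
  have [v [Hv Hc]] := IH Ef _ _ erefl.
  case: HT => u2 Hu2.
  exists (out None ++ (u2 ++ v)); split; last by rewrite /= count_cat (leq_trans Hc) ?leq_addl.
  apply: (run_step (c1:=(p1',[:: w; w]))).
    by exists b, (Push m.+1); split=> //; split=> //=; rewrite eqxx.
  apply: run_cat Hv.
  exact: (lift [:: w] Hu2).
-
  rewrite (apply_rew Ht) in Ha; case: Ha => Ha; subst w1.
  have [v [Hv Hc]] := IH Ef _ _ erefl.
  case: HT => u2 [Hu2 Hin].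
  exists (out None ++ (u2 ++ v)); split; last first.
    rewrite /= count_cat eqxx add1n.
    have : 0 < count_mem a u2 by rewrite -has_count has_pred1.
    move: Hc; clear; lia.
  apply: (run_step (c1:=(p1',[:: w; w]))).
    by exists b, (Push m.+1); split=> //; split=> //=; rewrite eqxx.
  apply: run_cat Hv.
  exact: (lift [:: w] Hu2).
Qed.

Lemma stepH_mk h h' (w w' : stack S m) b T g o :
  @hat_rule Q S G a m R h b T g o h' -> top1 w = Some b -> T w -> apply_op o w = Some w' ->
  stepH (h, w) g (h', w').
Proof. by move=> *; exists b, T, o. Qed.

Lemma pow_ineq x y c1 c2 : x < 2 ^ c1 -> y < 2 ^ c2 -> c2 <= c1 -> x + y < 2 ^ c1.+1.
Proof.
move=> Hx Hy Hc; have : 2 ^ c2 <= 2 ^ c1 by rewrite leq_exp2l.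
rewrite expnS; lia.
Qed.

Lemma P_to_hat
  (HG : forall q b g o q', R q b g o q' -> g = None \/ g = Some a)
  (Heps : forall q b g o q', R q b g o q' -> (o = Push m.+1 \/ o = Pop m.+1) -> g = None) k :
  forall p1 p2 (w : stack S m) u, runk k (p1, [:: w]) u (p2, [::]) ->
  exists u' (s : stack S m), run stepH (HPair p1 p2, w) u' (HFin, s) /\
     count_mem a u < 2 ^ count_mem a u'.
Proof.
elim/ltn_ind: k => k IH p1 p2 w u H.
inversion H; subst; clear H.
destruct c1 as [q1 s1].
move: H0 => [b [o [HR [Ht Ha]]]]; simpl in HR, Ht.
case: o HR Ha => [b'|k'|k'] HR Ha.
-
  have Ha' := Ha; rewrite (@apply_lvl (Rew b') w [::]) // in Ha'.
  case E: (apply_op (Rew b') w) Ha' => [w'|] //= [Es]; subst s1.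
  have [u' [s [Hr Hc]]] := IH k0 (ltnSn _) _ _ _ _ H1.
  exists (out g ++ u'), s; split.
    apply: run_step Hr; apply: (stepH_mk (b:=b) (T:=fun _ => True) (o:=Rew b')) => //.
    by constructor.
  rewrite !count_cat; case: (HG _ _ _ _ _ HR) => -> //=.
  rewrite eqxx add1n expnS; lia.
- case: (eqVneq k' m.+1) => Ek.
  + subst k'.
    have Eg := Heps _ _ _ _ _ HR (or_introl erefl); subst g.
    move: Ha => /= ; rewrite eqxx => -[Es]; subst s1.
    have [p [u1 [u2 [k1 [k2 [-> Hk Hr1 Hr2]]]]]] :=
      @split k0 q1 [:: w] [:: w] u0 p2 [::] H1 isT.
    have Hk1 : k1 < k0.+1 by rewrite ltnS -Hk leq_addr.
    have Hk2 : k2 < k0.+1 by rewrite ltnS -Hk leq_addl.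
    have [u1' [s1 [Hh1 Hc1]]] := IH k1 Hk1 _ _ _ _ Hr1.
    have [u2' [s2 [Hh2 Hc2]]] := IH k2 Hk2 _ _ _ _ Hr2.
    have Ht' : top1 w = Some b by [].
    rewrite count_cat.
    case: (leqP (count_mem a u2') (count_mem a u1')) => Hle.
    * case: (boolP (a \in u2)) => Hin.
      -- exists (out (Some a) ++ u1'), s1; split.
           apply: run_step Hh1; apply: (stepH_mk (b:=b) (o:=Rew b)) (apply_rew Ht') => //.
             exact: hat_iii_a HR.
           by exists u2; split=> //; exact: runk_run Hr2.
         rewrite /= eqxx add1n; exact: pow_ineq Hc1 Hc2 Hle.
      -- exists (out None ++ u1'), s1; split.
           apply: run_step Hh1; apply: (stepH_mk (b:=b) (o:=Rew b)) (apply_rew Ht') => //.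
             exact: hat_iii_eps HR.
           by exists u2; exact: runk_run Hr2.
         by rewrite (count_memPn Hin) addn0.
    * case: (boolP (a \in u1)) => Hin.
      -- exists (out (Some a) ++ u2'), s2; split.
           apply: run_step Hh2; apply: (stepH_mk (b:=b) (o:=Rew b)) (apply_rew Ht') => //.
             exact: hat_iv_a HR.
           by exists u1; split=> //; exact: runk_run Hr1.
         rewrite /= eqxx add1n addnC; apply: pow_ineq Hc2 Hc1 _; exact: ltnW.
      -- exists (out None ++ u2'), s2; split.
           apply: run_step Hh2; apply: (stepH_mk (b:=b) (o:=Rew b)) (apply_rew Ht') => //.
             exact: hat_iv_eps HR.
           by exists u1; exact: runk_run Hr1.
         by rewrite (count_memPn Hin).
  + have Ha' := Ha; rewrite (@apply_lvl (Push k') w [::]) // in Ha'; last by case=> E; rewrite E eqxx in Ek.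
    case E: (apply_op (Push k') w) Ha' => [w'|] //= [Es]; subst s1.
    have [u' [s [Hr Hc]]] := IH k0 (ltnSn _) _ _ _ _ H1.
    exists (out g ++ u'), s; split.
      apply: run_step Hr; apply: (stepH_mk (b:=b) (T:=fun _ => True) (o:=Push k')) => //.
      by constructor => // -[E']; rewrite E' eqxx in Ek.
    rewrite !count_cat; case: (HG _ _ _ _ _ HR) => -> //=.
    rewrite eqxx add1n expnS; lia.
- case: (eqVneq k' m.+1) => Ek.
  + subst k'.
    move: Ha => /= ; rewrite eqxx => -[Es]; subst s1.
    have [-> [Eq]] := runk_nil H1; subst q1.
    have Eg := Heps _ _ _ _ _ HR (or_intror erefl); subst g.
    exists [::], w; split => //.
    apply: (run_step (g:=None) (c1:=(HFin,w)) (u:=[::])); last by constructor.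
    apply: (stepH_mk (b:=b) (T:=fun _ => True) (o:=Rew b)) (apply_rew _) => //.
    exact: hat_ii HR.
  + have Ha' := Ha; rewrite (@apply_lvl (Pop k') w [::]) // in Ha'; last by case=> E; rewrite E eqxx in Ek.
    case E: (apply_op (Pop k') w) Ha' => [w'|] //= [Es]; subst s1.
    have [u' [s [Hr Hc]]] := IH k0 (ltnSn _) _ _ _ _ H1.
    exists (out g ++ u'), s; split.
      apply: run_step Hr; apply: (stepH_mk (b:=b) (T:=fun _ => True) (o:=Pop k')) => //.
      by constructor => // -[E']; rewrite E' eqxx in Ek.
    rewrite !count_cat; case: (HG _ _ _ _ _ HR) => -> //=.
    rewrite eqxx add1n expnS; lia.
Qed.
End Pf.

Theorem mainTheorem5 (Q S : finType) (G : eqType) (a : G) (m : nat)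
    (R : Q -> S -> option G -> op S -> Q -> Prop) (qin qf : Q) (ain : S)
    (HG : forall q b g o q', R q b g o q' -> g = None \/ g = Some a)
    (Hops : forall q b g o q', R q b g o q' -> in_ops m.+1 o)
    (Heps : forall q b g o q', R q b g o q' -> (o = Push m.+1 \/ o = Pop m.+1) -> g = None) :
  Unb a (@LP Q S G m R qin qf ain) <-> Unb a (@LPhat Q S G a m R qin qf ain).
Proof.
split=> H N.
- have [w [Hw Hc]] := H (2 ^ N).
  have [k Hk] := run_runk Hw.
  have [u' [s [Hr Hc']]] := P_to_hat HG Heps Hk.
  exists u'; split; first by exists s.
  have : 2 ^ N < 2 ^ count_mem a u' by exact: leq_ltn_trans Hc Hc'.
  by rewrite ltn_exp2l // => /ltnW.
- have [u [[s Hu] Hc]] := H N.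
  have [v [Hv Hc']] := hat_to_P Hu erefl (p1:=qin) (p2:=qf) erefl.
  by exists v; split => //; exact: leq_trans Hc Hc'.
Qed.
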